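(* For every $n\in\mathbb N$ there exists $N\in\mathbb N$ such that every finite strongly connected digraph $D$ on at least $N$ vertices contains (1) a dipath of length at least $n$, or (2) an $n$-short $(n,0)$-system of dipaths.
   Context: All digraphs are finite; a dipath is a directed path, a dicycle a directed cycle, and lengths count edges. Let $x,y$ be two, possibly equal, vertices and $k,\ell\in\mathbb N$ (with $\ell=0$ allowed). A $(k,\ell)$-system of $x$--$y$ dipaths is a system of $k+\ell$ internally disjoint dipaths (or dicycles through $x$ in case $x=y$), $k$ of which are $x$--$y$ dipaths and $\ell$ of which are $y$--$x$ dipaths; a $(k,\ell)$-system of dipaths is a $(k,\ell)$-system of $x$--$y$ dipaths for some $x,y$. Such a system $\mathcal P$ is $n$-short if, in case $x\ne y$, $|V(P)\cup V(Q)|<n$ for every $x$--$y$ dipath $P\in\mathcal P$ and every $y$--$x$ dipath $Q\in\mathcal P$, and, in case $x=y$, every dicycle in $\mathcal P$ has length less than $n$. *)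

(* Defs.v *)
(* A finite digraph is a finType V with an irreflexive
   arc relation E : rel V (no loops, no parallel arcs). *)
From mathcomp Require Import all_boot.
Set Implicit Arguments. Unset Strict Implicit. Unset Printing Implicit Defensive.

Section Digraphs.
Variables (V : finType) (E : rel V).

(* A dipath is represented by its sequence of vertices [v0; ...; vk];
   its length is k = (size s).-1.  [is_dipath x y s]: s is an x--y dipath. *)
Definition is_dipath (x y : V) (s : seq V) : bool :=
  if s is z :: t then [&& z == x, uniq s, path E z t & last z t == y]
  else false.

(* A dicycle through x, given by its vertex sequence [x; v1; ...; vk]
   (k >= 1), with arcs x->v1->...->vk->x; its length is size s. *)
Definition is_dicycle_through (x : V) (s : seq V) : bool :=
  if s is z :: t then [&& z == x, uniq s, t != [::] & cycle E s]
  else false.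

Definition int_disj (x y : V) (s t : seq V) : Prop :=
  s <> t /\ forall v, v \in s -> v \in t -> v = x \/ v = y.

Definition kl_system (k l : nat) (x y : V)
    (P : 'I_k -> seq V) (Q : 'I_l -> seq V) : Prop :=
  [/\ (forall i, if x == y then is_dicycle_through x (P i)
                 else is_dipath x y (P i)),
      (forall j, if x == y then is_dicycle_through x (Q j)
                 else is_dipath y x (Q j)),
      (forall i i', i != i' -> int_disj x y (P i) (P i')),
      (forall j j', j != j' -> int_disj x y (Q j) (Q j')) &
      (forall i j, int_disj x y (P i) (Q j))].

Definition n_short (n : nat) (k l : nat) (x y : V)
    (P : 'I_k -> seq V) (Q : 'I_l -> seq V) : Prop :=
  if x == y then
    (forall i, size (P i) < n) /\ (forall j, size (Q j) < n)
  else forall i j, #|[set v | (v \in P i) || (v \in Q j)]| < n.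

Definition strongly_connected : Prop := forall u v : V, connect E u v.

End Digraphs.

(* Main.v *)
Require Import Defs.
From mathcomp Require Import all_boot zify.
From Stdlib Require Import Classical.
Set Implicit Arguments. Unset Strict Implicit. Unset Printing Implicit Defensive.

Lemma sumn_map_le (T : eqType) (g : T -> nat) (l : seq T) b :
  (forall x, x \in l -> g x <= b) -> sumn (map g l) <= size l * b.
Proof.
elim: l => [|y l IH] //= H.
rewrite mulSn leq_add //; first by apply: H; rewrite inE eqxx.
by apply: IH => x Hx; apply: H; rewrite inE Hx orbT.
Qed.

Section S.
Variables (V : finType) (E : rel V).

Definition goal2 (n : nat) := exists (x y : V) (P : 'I_n -> seq V) (Q : 'I_0 -> seq V),
          kl_system E x y P Q /\ n_short n x y P Q.

Fixpoint h (n s : nat) : nat := if s is s'.+1 then n * s * h n s' + 2 else 1.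

Definition disj (t : V) (f : V -> seq V) (C : {set V}) : bool :=
  [forall c in C, forall c' in C, (c != c') ==>
     [forall z, ((z \in f c) && (z \in f c')) ==> (z == t)]].

Lemma build n a t (C : {set V}) (f : V -> seq V) :
  irreflexive E -> n <= #|C| -> disj t f C ->
  (forall u, u \in C -> [/\ E a u, is_dipath E u t (f u), size (f u) < n & (a \in f u -> a = t)]) ->
  goal2 n.
Proof.
move=> Hirr HnC Hd HC.
have Hdj : forall c c' z, c \in C -> c' \in C -> c != c' -> z \in f c -> z \in f c' -> z = t.
  move=> c c' z Hc Hc' Hcc' Hz Hz'.
  move/forallP: Hd => /(_ c); rewrite Hc /= => /forallP /(_ c'); rewrite Hc' /= Hcc' /=.
  by move=> /forallP /(_ z); rewrite Hz Hz' /= => /eqP.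
pose c (i : 'I_n) := nth a (enum C) i.
have cC : forall i, c i \in C.
  move=> i; rewrite -mem_enum mem_nth // -cardE; exact: leq_trans (ltn_ord i) HnC.
have cinj : forall i i', i != i' -> c i != c i'.
  move=> i i' Hii; rewrite /c nth_uniq ?enum_uniq // -?cardE.
  - exact: leq_trans (ltn_ord i) HnC.
  - exact: leq_trans (ltn_ord i') HnC.
pose Q := fun j : 'I_0 => [::] : seq V.
have [eat|neat] := eqVneq a t.
- subst t.
  exists a, a, (fun i => belast a (f (c i))), Q; rewrite /kl_system /n_short eqxx.
  have Hcyc : forall i, is_dicycle_through E a (belast a (f (c i))).
    move=> i; have [Ea Hp _ _] := HC _ (cC i).
    move: Hp; rewrite /is_dipath; case Efc: (f (c i)) => [|z r] // /and4P [/eqP zc Hu Hpth /eqP Hl].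
    subst z.
    have Hu' := Hu; rewrite lastI Hl rcons_uniq in Hu'.
    case/andP: Hu' => Hna Hub.
    rewrite /= eqxx /= Hna Hub /=.
    apply/andP; split.
      by case: r Hl {Hu Hpth Hna Hub Efc} => //= Hl; rewrite Hl Hirr in Ea.
    by rewrite /= -Hl -lastI Hl /= Ea Hpth.
  split; [split| ].
  + exact: Hcyc.
  + by case.
  + move=> i i' Hii; split.
      have Hne : c i != a.
        by have [Ea _ _ _] := HC _ (cC i); apply/eqP => Hx; rewrite Hx Hirr in Ea.
      have Hm : c i \in belast a (f (c i)).
        have [Ea Hp _ _] := HC _ (cC i).
        move: Hp; rewrite /is_dipath; case: (f (c i)) => [|z r] // /and4P [/eqP zc _ _ /eqP Hl].
        subst z; case: r Hl => [|y r] /= Hl; first by rewrite Hl eqxx in Hne.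
        by rewrite !inE eqxx orbT.
      move=> Heq; move: Hm; rewrite Heq => /mem_belast; rewrite inE => /orP [/eqP Hx|Hx].
        by rewrite Hx eqxx in Hne.
      have Hci : c i \in f (c i).
        have [_ Hp _ _] := HC _ (cC i).
        by move: Hp; rewrite /is_dipath; case: (f (c i)) => [|z r] // /and4P [/eqP -> _ _ _]; rewrite inE eqxx.
      have := Hdj _ _ _ (cC i) (cC i') (cinj _ _ Hii) Hci Hx.
      by move=> Hx'; rewrite Hx' eqxx in Hne.
    move=> v Hv Hv'; left.
    move: Hv Hv' => /mem_belast Hv /mem_belast Hv'.
    move: Hv Hv'; rewrite !inE => /orP [/eqP //|Hv] /orP [/eqP //|Hv'].
    exact: Hdj (cC i) (cC i') (cinj _ _ Hii) Hv Hv'.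
  + by case.
  + by move=> ? [].
  + split; last by case.
    move=> i; have [_ Hp Hs _] := HC _ (cC i).
    by move: Hp Hs; case: (f (c i)) => [|z r] //=; rewrite size_belast.
- exists a, t, (fun i => a :: f (c i)), Q; rewrite /kl_system /n_short (negbTE neat).
  split; [split| ].
  + move=> i; have [Ea Hp _ Hat] := HC _ (cC i).
    have Hna : a \notin f (c i) by apply/negP => /Hat Hx; rewrite Hx eqxx in neat.
    move: Hp Hna; rewrite /is_dipath; case: (f (c i)) => [|z r] // /and4P [/eqP zc Hu Hpth /eqP Hl] Hna.
    subst z. rewrite eqxx /=; rewrite Hna. rewrite /= in Hu. rewrite Hu Ea Hpth /= Hl. done.
  + by case.
  + move=> i i' Hii; split.
      have [_ Hp _ _] := HC _ (cC i); have [_ Hp' _ _] := HC _ (cC i').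
      move: Hp Hp'; case: (f (c i)) => [|z r] //=; case: (f (c i')) => [|z' r'] //=.
      move=> /and4P [/eqP -> _ _ _] /and4P [/eqP -> _ _ _] [] Heq.
      by move: (cinj _ _ Hii); rewrite Heq eqxx.
    move=> v; rewrite !inE => /orP [/eqP ->|Hv]; first by left.
    move=> /orP [/eqP ->|Hv']; first by left.
    right; exact: Hdj (cC i) (cC i') (cinj _ _ Hii) Hv Hv'.
  + by case.
  + by move=> ? [].
  + by move=> ? [].
Qed.

Lemma claim n a : irreflexive E -> forall s t (U : {set V}) (f : V -> seq V),
  s < n ->
  (forall u, u \in U -> [/\ E a u, is_dipath E u t (f u), size (f u) <= s & (a \in f u -> a = t)]) ->
  h n s <= #|U| -> goal2 n.
Proof.
move=> Hirr; elim=> [|s IH] t U f Hsn HU HhU.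
  have : 0 < #|U| by [].
  case/card_gt0P => u Hu; have [_ Hp Hs _] := HU u Hu.
  by move: Hp Hs; case: (f u).
pose P (C : {set V}) := (C \subset U) && disj t f C.
have P0 : P set0.
  by rewrite /P sub0set /disj; apply/forallP => c; rewrite inE.
case: (arg_maxnP (fun C : {set V} => #|C|) P0) => C /andP [CU Cd] Cmax.
have [HnC|HCn] := leqP n #|C|.
  apply: (@build n a t C f Hirr HnC Cd) => u Hu; have [H1 H2 H3 H4] := HU u (subsetP CU u Hu).
  by split => //; move: H3 Hsn; lia.
pose W := [set z in flatten (map f (enum C)) | z != t].
have HW : #|W| <= #|C| * s.+1.
  have H1 : #|W| <= #|flatten (map f (enum C))|.
    by apply: subset_leq_card; apply/subsetP => z; rewrite inE => /andP [].
  apply: (leq_trans H1); apply: (leq_trans (card_size _)).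
  rewrite size_flatten /shape -map_comp cardE.
  apply: sumn_map_le => c; rewrite mem_enum => Hc /=.
  by have [_ _ H3 _] := HU c (subsetP CU c Hc).
have Hflat : forall c z, c \in C -> z \in f c -> z != t -> z \in W.
  move=> c z Hc Hz Hzt; rewrite inE Hzt andbT; apply/flattenP; exists (f c) => //.
  by apply/mapP; exists c => //; rewrite mem_enum.
have Hhead : forall u, u \in U -> u \in f u.
  move=> u Hu; have [_ Hp _ _] := HU u Hu.
  by move: Hp; rewrite /is_dipath; case: (f u) => [|z r] // /and4P [/eqP -> _ _ _]; rewrite inE eqxx.
have Hmeet : forall u, u \in U -> u != t -> has (mem W) (f u).
  move=> u Hu Hut; apply/negPn/negP => /negP Hno.
  case Huc: (u \in C).
    by apply: Hno; apply/hasP; exists u; [exact: Hhead | exact: Hflat Huc (Hhead u Hu) Hut].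
  have HPu : P (u |: C).
    rewrite /P subUset sub1set Hu CU /=.
    apply/forallP => c; apply/implyP => Hc; apply/forallP => c'; apply/implyP => Hc'.
    apply/implyP => Hcc'; apply/forallP => z; apply/implyP => /andP [Hz Hz'].
    move: Hc Hc'; rewrite !inE => /orP [/eqP Ec|Hc] /orP [/eqP Ec'|Hc'].
    - by rewrite Ec Ec' eqxx in Hcc'.
    - subst c; apply/negPn/negP => Hzt; apply: Hno; apply/hasP; exists z => //.
      exact: Hflat Hc' Hz' Hzt.
    - subst c'; apply/negPn/negP => Hzt; apply: Hno; apply/hasP; exists z => //.
      exact: Hflat Hc Hz Hzt.
    - move/forallP: Cd => /(_ c); rewrite Hc /= => /forallP /(_ c'); rewrite Hc' /= Hcc' /=.
      by move=> /forallP /(_ z); rewrite Hz Hz'.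
  have := Cmax _ HPu; rewrite cardsU1 Huc /=; lia.
pose g u := nth t (f u) (find (mem W) (f u)).
pose U1 := [set u in U | u != t].
have HU1 : #|U| <= #|U1|.+1.
  apply: leq_trans (_ : #|t |: U1| <= _).
    apply: subset_leq_card; apply/subsetP => u Hu; rewrite !inE Hu /=.
    by case: eqP.
  by rewrite cardsU1; case: (t \in U1).
have Hg : forall u, u \in U1 -> g u \in W.
  move=> u; rewrite inE => /andP [Hu Hut]; exact: nth_find (Hmeet u Hu Hut).
have [w Hw Hfib] : exists2 w, w \in W & h n s <= #|[set u in U1 | g u == w]|.
  case: (boolP [exists w in W, h n s <= #|[set u in U1 | g u == w]|]).
    by case/exists_inP => w ? ?; exists w.
  move/exists_inP => Hno; exfalso.
  have : #|U1| <= #|W| * (h n s).-1.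
    rewrite -sum1_card (partition_big g (mem W)) //= -sum_nat_const.
    apply: leq_sum => w Hw.
    have -> : \sum_(i | (i \in U1) && (g i == w)) 1 = #|[set u in U1 | g u == w]|.
      by rewrite -sum1_card; apply: eq_bigl => u; rewrite inE.
    have : ~~ (h n s <= #|[set u in U1 | g u == w]|).
      by apply/negP => Hx; apply: Hno; exists w.
    lia.
  have : #|W| * (h n s).-1 <= #|C| * s.+1 * (h n s).-1 by rewrite leq_mul2r HW orbT.
  have : #|C| * s.+1 * (h n s).-1 <= n * s.+1 * (h n s) by apply: leq_mul; [apply: leq_mul; [apply: ltnW|] |apply: leq_pred].
  move: HhU HU1 => /=; lia.
pose f' u := take (find (mem W) (f u)).+1 (f u).
apply: (IH w [set u in U1 | g u == w] f') => //; first exact: ltnW.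
move=> u; rewrite !inE => /andP [/andP [Hu Hut] /eqP Hgw].
have [Ea Hp Hs Hat] := HU u Hu.
have Hi : find (mem W) (f u) < size (f u) by rewrite -has_find; exact: Hmeet.
have Hwt : w != t by move: Hw; rewrite inE => /andP [].
have Hlast : last t (f u) = t.
  by move: Hp; rewrite /is_dipath; case: (f u) => [|z r] // /and4P [_ _ _ /eqP].
have Hi' : (find (mem W) (f u)).+1 < size (f u).
  move: Hi; rewrite leq_eqVlt => /orP [/eqP Hx|] //.
  have : nth t (f u) (size (f u)).-1 = t by rewrite nth_last.
  by rewrite -Hx /= -/(g u) Hgw => Hx'; rewrite Hx' eqxx in Hwt.
have Huniq : uniq (f u) by move: Hp; rewrite /is_dipath; case: (f u) => [|z r] // /and4P [].
split => //.
- rewrite /f'; move: Hp Hgw Hi Hi'; rewrite /g /is_dipath.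
  case: (f u) => [|z r] // /and4P [Hz Hu' Hpth _].
  set i := find _ _ => Hgw Hi Hi'.
  have Htk := take_nth t Hi; rewrite Hgw in Htk.
  change ([&& z == u, uniq (z :: take i r), path E z (take i r) & last z (take i r) == w]).
  apply/and4P; split => //.
  - exact: (take_uniq i.+1 Hu').
  - exact: take_path.
  by rewrite -[last z _]/(last z (z :: take i r)) -[z :: take i r]/(take i.+1 (z :: r)) Htk last_rcons.
- rewrite /f' size_take Hi'; move: Hi' Hs; lia.
- move=> /[dup] /mem_take /Hat Hat'; subst a => Ht.
  move: Ht; rewrite in_take; last by apply/(nthP t); exists (size (f u)).-1; [rewrite ltn_predL; exact: leq_ltn_trans (leq0n _) Hi | rewrite nth_last].
  have -> : index t (f u) = (size (f u)).-1.
    by rewrite -{1}Hlast -nth_last index_uniq // prednK // (leq_ltn_trans _ Hi).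
  move: Hi'; lia.
Qed.

Definition step (B : {set V}) : {set V} := [set z | [exists y in B, (y == z) || E y z]].
Definition ball (x : V) (d : nat) : {set V} := iter d step [set x].

Lemma step_sub (B : {set V}) : B \subset step B.
Proof. by apply/subsetP => y Hy; rewrite inE; apply/exists_inP; exists y; rewrite ?eqxx. Qed.

Lemma card_step K (B : {set V}) : (forall v, #|[set w | E v w]| < K) -> #|step B| <= #|B| * K.
Proof.
move=> HK.
pose F y := enum [set z | (y == z) || E y z].
have H1 : #|step B| <= #|flatten (map F (enum B))|.
  apply: subset_leq_card; apply/subsetP => z; rewrite inE => /exists_inP [y Hy Hz].
  apply/flattenP; exists (F y); first by apply/mapP; exists y; rewrite ?mem_enum.
  by rewrite mem_enum inE.
apply: (leq_trans H1); apply: (leq_trans (card_size _)).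
rewrite size_flatten /shape -map_comp cardE.
apply: sumn_map_le => y _ /=; rewrite /F -cardE.
apply: leq_trans (_ : #|y |: [set w | E y w]| <= _).
  by apply: subset_leq_card; apply/subsetP => z; rewrite !inE eq_sym.
rewrite cardsU1; have := HK y; case: (_ \notin _) => /=; lia.
Qed.

Lemma card_ball K x d : (forall v, #|[set w | E v w]| < K) -> #|ball x d| <= K ^ d.
Proof.
move=> HK; elim: d => [|d IH]; first by rewrite /ball /= cards1.
rewrite /ball iterS -/(ball x d) expnS mulnC.
apply: (leq_trans (card_step _ HK)); exact: leq_mul.
Qed.

Lemma ball_mono x d m : ball x d \subset ball x (d + m).
Proof.
elim: m => [|m IH]; first by rewrite addn0.
rewrite addnS /ball iterS; exact: subset_trans IH (step_sub _).
Qed.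

Lemma path_ball x p : path E x p -> last x p \in ball x (size p).
Proof.
elim/last_ind: p => [|p z IH]; first by rewrite /= /ball /= inE.
rewrite rcons_path last_rcons size_rcons => /andP [Hp He].
rewrite /ball iterS -/(ball x (size p)) inE; apply/exists_inP; exists (last x p).
  exact: IH.
by rewrite He orbT.
Qed.

Lemma dipath_of_connect u v : connect E u v -> exists p, is_dipath E u v p.
Proof.
case/connectP => p Hp ->.
case: (shortenP Hp) => p' Hp' Hu' _.
by exists (u :: p'); rewrite /is_dipath eqxx Hu' Hp' eqxx.
Qed.

End S.

Theorem theorem3p3 :
  forall n : nat, exists N : nat,
    forall (V : finType) (E : rel V),
      irreflexive E -> strongly_connected E -> N <= #|V| ->
      (exists (x y : V) (s : seq V), is_dipath E x y s /\ n <= (size s).-1)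
      \/
      (exists (x y : V) (P : 'I_n -> seq V) (Q : 'I_0 -> seq V),
          kl_system E x y P Q /\ n_short n x y P Q).
Proof.
move=> n; pose K := h n n.-1 + n + 1; exists (K ^ n).+1.
move=> V E Hirr Hsc HN.
case: (classic (exists x y s, is_dipath E x y s /\ n <= (size s).-1)) => [H|H]; [by left | right].
have Hnl : forall x y s, is_dipath E x y s -> (size s).-1 < n.
  move=> x y s Hs; rewrite ltnNge; apply/negP => Hn; apply: H; by exists x, y, s.
have [v Hv] : exists v, K <= #|[set w | E v w]|.
  case: (boolP [exists v, K <= #|[set w | E v w]|]); first by case/existsP => v; exists v.
  move=> Hno; exfalso.
  have HK : forall v, #|[set w | E v w]| < K.
    by move=> v; rewrite ltnNge; apply/negP => Hx; move/negP: Hno; apply; apply/existsP; exists v.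
  have : 0 < #|V| by apply: leq_trans HN.
  case/card_gt0P => x _.
  have : #|V| <= K ^ n.
    apply: (leq_trans _ (card_ball x n HK)).
    rewrite -cardsT; apply: subset_leq_card; apply/subsetP => y _.
    have [p Hp] := dipath_of_connect (Hsc x y).
    have Hl := Hnl _ _ _ Hp.
    move: Hp Hl; rewrite /is_dipath; case: p => [|z r] // /and4P [/eqP -> _ Hpth /eqP <-] /= Hl.
    have := path_ball Hpth; move/(subsetP (ball_mono E x (size r) (n - size r))).
    by rewrite subnKC // ltnW.
  by move: HN; lia.
pose S := [set w | E v w].
have Hex : forall u, exists p, is_dipath E u v p by move=> u; exact: dipath_of_connect.
pose f u := xchoose (Hex u).
have Hf : forall u, is_dipath E u v (f u) by move=> u; exact: xchooseP.
have Hsz : forall u, u \in S -> size (f u) < n.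
  move=> u Hu; have Hl := Hnl _ _ _ (Hf u).
  rewrite ltnNge; apply/negP => Hn.
  have : ~~ (S \subset mem (f u)).
    apply/negP => Hsub.
    have H1 : #|S| <= size (f u) := leq_trans (subset_leq_card Hsub) (card_size _).
    move: (leq_trans Hv H1) Hl; rewrite /K. move: (h n n.-1) (size (f u)) => a b. lia.
  case/subsetPn => w Hw Hwn.
  apply: H; exists u, w, (rcons (f u) w); split; last by rewrite size_rcons.
  move: (Hf u) Hwn; rewrite /is_dipath; case: (f u) => [|z r] // /and4P [Hz Hun Hpth /eqP Hl'] Hwn.
  change ([&& z == u, uniq (rcons (z :: r) w), path E z (rcons r w) & last z (rcons r w) == w]).
  rewrite Hz rcons_uniq Hwn Hun rcons_path Hpth Hl' last_rcons eqxx /=.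
  by move: Hw; rewrite inE andbT.
have [u0 Hu0] : exists u, u \in S.
  have : 0 < #|S| by apply: leq_trans Hv; rewrite /K addn1.
  by case/card_gt0P => u Hu; exists u.
have Hn0 : 0 < n.
  move: (Hsz u0 Hu0) (Hf u0); case: (f u0) => [|z r] // Hs _; move: Hs => /=; lia.
apply: (@claim V E n v Hirr n.-1 v S f).
- by rewrite prednK.
- move=> u Hu; split => //.
  + by move: Hu; rewrite inE.
  + by rewrite -ltnS prednK //; exact: Hsz.
- by apply: leq_trans Hv; rewrite /K -addnA leq_addr.
Qed.
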